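(* Let $\mathcal{O}_K$ be a Dedekind domain and let $\mathfrak{n}$ be a composite ideal of $\mathcal{O}_K$. Then $\mathfrak{n}$ is a Carmichael ideal of $\mathcal{O}_K$ if and only if all of the following hold: (1) $\mathfrak{n}$ is square-free; (2) $N_K(\mathfrak{n})$ is finite; (3) $N_K(\mathfrak{p})-1$ divides $N_K(\mathfrak{n})-1$ for every prime ideal $\mathfrak{p}$ dividing $\mathfrak{n}$.
   Context: For an ideal $\mathfrak{n}$ of $\mathcal{O}_K$, $N_K(\mathfrak{n})=|\mathcal{O}_K/\mathfrak{n}|$. A composite ideal means a nonzero proper ideal that is not a prime ideal. A finite ring $S$ is a Carmichael ring if $S$ is not a field and $a^{|S|}=a$ for every $a\in S$; an ideal $I$ of a ring $R$ is a Carmichael ideal if $R/I$ is a Carmichael ring. Square-free means that in the prime ideal factorization of $\mathfrak{n}$ every exponent equals $1$. *)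

(* Defs.v *)
(* Ideals of a commutative ring R are represented as
   Prop-valued subsets R -> Prop; quotient rings R/I are handled through
   complete residue systems. *)
From HB Require Import structures.
From mathcomp Require Import all_boot all_order all_algebra.
Set Implicit Arguments. Unset Strict Implicit. Unset Printing Implicit Defensive.
Import Order.TTheory GRing.Theory Num.Theory.
Local Open Scope ring_scope.

Section Ideals.
Variable R : comNzRingType.

Definition subset_eq (I J : R -> Prop) := forall x, I x <-> J x.

Definition is_ideal (I : R -> Prop) : Prop :=
  [/\ I 0, (forall x y, I x -> I y -> I (x + y)),
      (forall x, I x -> I (- x)) & (forall r x, I x -> I (r * x))].

Definition ideal_mul (I J : R -> Prop) : R -> Prop := fun z =>
  exists n (a b : 'I_n -> R), (forall i, I (a i)) /\ (forall i, J (b i)) /\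
    z = \sum_(i < n) a i * b i.

Definition ideal_gen (s : seq R) : R -> Prop := fun z =>
  exists c : 'I_(size s) -> R, z = \sum_(i < size s) c i * s`_i.

Definition is_zero_ideal (I : R -> Prop) := forall x, I x -> x = 0.
Definition is_proper_ideal (I : R -> Prop) := is_ideal I /\ ~ I 1.

Definition is_prime_ideal (P : R -> Prop) : Prop :=
  is_proper_ideal P /\ (forall a b, P (a * b) -> P a \/ P b).

Definition is_maximal_ideal (M : R -> Prop) : Prop :=
  is_proper_ideal M /\
  forall J, is_ideal J -> (forall x, M x -> J x) -> subset_eq J M \/ J 1.

Definition ideal_dvd (I N : R -> Prop) : Prop :=
  exists J, is_ideal J /\ subset_eq N (ideal_mul I J).

Definition is_composite_ideal (N : R -> Prop) : Prop :=
  is_proper_ideal N /\ ~ is_zero_ideal N /\ ~ is_prime_ideal N.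

Definition squarefree_ideal (N : R -> Prop) : Prop :=
  forall P, is_prime_ideal P -> ~ is_zero_ideal P -> ~ ideal_dvd (ideal_mul P P) N.

Definition ideal_norm_eq (I : R -> Prop) (k : nat) : Prop :=
  exists s : seq R, size s = k /\
    (forall i j, (i < k)%N -> (j < k)%N -> I (s`_i - s`_j) -> i = j) /\
    (forall x, exists2 i, (i < k)%N & I (x - s`_i)).

Definition ideal_norm_finite (I : R -> Prop) : Prop := exists k, ideal_norm_eq I k.

Definition quotient_is_field (I : R -> Prop) : Prop :=
  ~ I 1 /\ forall x, ~ I x -> exists y, I (x * y - 1).

Definition carmichael_ideal (I : R -> Prop) : Prop :=
  exists k, [/\ ideal_norm_eq I k, ~ quotient_is_field I &
                forall a, I (a ^+ k - a)].

End Ideals.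

Section Dedekind.
Variable R : idomainType.

Definition noetherian_ring : Prop :=
  forall I : R -> Prop, is_ideal I -> exists s : seq R, subset_eq I (ideal_gen s).

Definition integrally_closed : Prop :=
  forall x : {fraction R},
    (exists p : {poly R}, p \is monic /\ root (map_poly (@FracField.tofrac R) p) x) ->
    exists r : R, x = FracField.tofrac r.

Definition nonzero_primes_maximal : Prop :=
  forall P : R -> Prop, is_prime_ideal P -> ~ is_zero_ideal P -> is_maximal_ideal P.

Definition dedekind_domain : Prop :=
  [/\ noetherian_ring, integrally_closed & nonzero_primes_maximal].

End Dedekind.

(* Main.v *)
Require Import Defs.
From HB Require Import structures.
From mathcomp Require Import all_boot all_order all_algebra all_field.
From Stdlib Require Import Classical ClassicalEpsilon.
Set Implicit Arguments. Unset Strict Implicit. Unset Printing Implicit Defensive.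
Import GRing.Theory.
Local Open Scope ring_scope.
Local Open Scope quotient_scope.

Definition asb (A : Prop) : bool := if excluded_middle_informative A then true else false.
Lemma asbP (A : Prop) : reflect A (asb A).
Proof. rewrite /asb; case: excluded_middle_informative => h; by constructor. Qed.

Section Quot.
Variable R : comNzRingType.
Variable P : R -> Prop.
Hypothesis hPi : is_ideal P.
Hypothesis hP1 : ~ P 1.

Definition Pb : R -> bool := fun x => asb (P x).

Lemma Pb_closed : idealr_closed Pb.
Proof.
case: hPi => P0 PD PN PM.
split; first by apply/asbP.
  by apply/asbP.
move=> a u v /asbP hu /asbP hv; apply/asbP; apply: PD => //; exact: PM.
Qed.

HB.instance Definition _ := isIdealr.Build R Pb Pb_closed.

Local Notation Qt := {ideal_quot (Pb : idealr R)}.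
Local Notation piQ := (\pi_Qt).

Lemma piQE x y : piQ x = piQ y <-> P (x - y).
Proof.
have := Quotient.idealrBE (Pb : idealr R) x y.
rewrite -[_ == _]/(piQ x == piQ y) => e.
split => h.
  by move: e; rewrite h eqxx => /asbP.
by apply/eqP; rewrite -e; apply/asbP.
Qed.

Lemma piQ0 x : P x -> piQ x = 0.
Proof. by move=> h; rewrite -(rmorph0 piQ); apply/piQE; rewrite subr0. Qed.

Lemma piQ0E x : piQ x = 0 <-> P x.
Proof. by rewrite -(rmorph0 piQ) piQE subr0. Qed.

Lemma det1B_mod n (A : 'M[R]_n) : (forall i j, P (A i j)) -> P (\det (1%:M - A) - 1).
Proof.
move=> hA; apply/piQE; rewrite -det_map_mx rmorph1.
have -> : map_mx piQ (1%:M - A) = 1%:M.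
  apply/matrixP => i j; rewrite !mxE rmorphB rmorph_nat -[RHS]subr0; congr (_ - _).
  exact: (piQ0 (hA i j)).
by rewrite det1 rmorph1.
Qed.

Section QField.
Hypothesis hPf : forall x, ~ P x -> exists y, P (x * y - 1).

Definition invQ (x : Qt) : Qt :=
  if excluded_middle_informative (exists y : Qt, y * x == 1) is left h then xchoose h else 0.

Lemma mulVQ (x : Qt) : x != 0 -> invQ x * x = 1.
Proof.
move=> x0; rewrite /invQ; case: excluded_middle_informative => h.
  exact/eqP/(xchooseP h).
exfalso; apply: h.
have [y hy] : exists y, P (repr x * y - 1).
  apply: hPf => hx; move/eqP: x0; apply.
  by rewrite -[x]reprK; apply/piQ0E.
exists (piQ y); apply/eqP.
rewrite -[x in _ * x]reprK -rmorphM -(rmorph1 piQ); apply/piQE.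
by rewrite mulrC.
Qed.

Lemma invQ0 : invQ 0 = 0.
Proof.
rewrite /invQ; case: excluded_middle_informative => // h.
exfalso; case: h => y; by rewrite mulr0 eq_sym oner_eq0.
Qed.

Definition Qf : Type := (fun _ : (forall x, ~ P x -> exists y, P (x * y - 1)) => Qt) hPf.
HB.instance Definition _ := GRing.ComNzRing.on Qf.
HB.instance Definition _ := GRing.ComNzRing_isField.Build Qf mulVQ invQ0.

Section QFin.
Variable q : nat.
Variable s : seq R.
Hypothesis hs1 : size s = q.
Hypothesis hs2 : forall i j, (i < q)%N -> (j < q)%N -> P (s`_i - s`_j) -> i = j.
Hypothesis hs3 : forall x, exists2 i, (i < q)%N & P (x - s`_i).

Definition Qff : Type := (fun _ : size s = q => Qf) hs1.
HB.instance Definition _ := GRing.Field.on Qff.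

Definition gq (i : 'I_q) : Qff := piQ s`_i.
Definition fq (x : Qff) : option 'I_q := [pick i | gq i == x].
Lemma fqK : pcancel fq (omap gq).
Proof.
move=> x; rewrite /fq; case: pickP => [i /eqP hi|h] /=; first by rewrite hi.
exfalso; have [i hi hP] := hs3 (repr x).
move: (h (Ordinal hi)); rewrite /gq /= -[x in _ == x]reprK.
by move/eqP; apply; apply/esym/piQE.
Qed.
HB.instance Definition _ := PCanIsCountable fqK.
HB.instance Definition _ := isFinite.Build Qff (@pcan_enumP Qff _ fq _ fqK).

Lemma gq_inj : injective gq.
Proof.
move=> i j; rewrite /gq => /piQE h; apply/val_inj; exact: hs2 (ltn_ord i) (ltn_ord j) h.
Qed.

Lemma card_Qff : #|(Qff : finType)| = q.
Proof.
rewrite -[RHS]card_ord -(card_codom gq_inj); apply: eq_card => x.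
have -> : x \in codom gq.
  apply/codomP; move: (fqK x); case: (fq x) => [i /= [<-]|//]; by exists i.
by [].
Qed.

Lemma fermatQ a : P (a ^+ q - a).
Proof.
apply/piQE; rewrite rmorphXn.
have := expf_card (piQ a : Qff); rewrite card_Qff; exact.
Qed.

Lemma q_gt1 : (1 < q)%N.
Proof. by rewrite -card_Qff finNzRing_gt1. Qed.

Lemma expQ1 (x : Qff) : x != 0 -> x ^+ (q - 1) = 1.
Proof.
move=> x0; apply: (mulIf x0); rewrite mul1r -exprSr subn1 prednK ?card_Qff.
  by rewrite -card_Qff expf_card.
by rewrite ltnW // q_gt1.
Qed.

Lemma powQ m : (0 < m)%N -> (q - 1 %| m - 1)%N -> forall a, P (a ^+ m - a).
Proof.
move=> m0 /dvdnP [k hk].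
have hx : forall x : Qff, x ^+ m = x.
  move=> x; have [->|x0] := eqVneq x 0; first by rewrite expr0n eqn0Ngt m0.
  by rewrite -(subnK m0) exprD expr1 hk mulnC exprM expQ1 // expr1n mul1r.
move=> a; apply/piQE; rewrite rmorphXn; exact: hx.
Qed.

Lemma korseltQ m : (0 < m)%N -> (forall a, P (a ^+ m - a)) -> (q - 1 %| m - 1)%N.
Proof.
move=> m0 hm.
have hF : forall x : Qff, x ^+ m = x.
  move=> x; rewrite -[x]reprK -rmorphXn; apply/piQE; exact: hm.
have hq := expQ1.
have hm1 : forall x : Qff, x != 0 -> x ^+ (m - 1) = 1.
  move=> x x0; apply: (mulIf x0); rewrite mul1r -exprSr subn1 prednK //; exact: hF.
set r := ((m - 1) %% (q - 1))%N.
have hr : forall x : Qff, x != 0 -> x ^+ r = 1.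
  move=> x x0; move: (hm1 x x0); rewrite {1}(divn_eq (m - 1) (q - 1)) exprD.
  by rewrite mulnC exprM hq // expr1n mul1r.
have q1 : (0 < q - 1)%N by rewrite subn_gt0 q_gt1.
case r0 : (r == 0)%N; first by rewrite /dvdn -/r r0.
exfalso.
have := @max_unity_roots Qff r (enum (predC1 (0 : Qff))).
rewrite lt0n r0 enum_uniq -cardE cardC1 card_Qff => /(_ isT).
have -> : all r.-unity_root (enum (predC1 (0 : Qff))).
  apply/allP => x; rewrite mem_enum inE => x0; rewrite unity_rootE hr //.
move=> /(_ isT isT); rewrite leqNgt.
have : (r < q - 1)%N by rewrite ltn_mod.
by rewrite -subn1 => ->.
Qed.
End QFin.
End QField.
End Quot.

Lemma fin_quot_pow (R : comNzRingType) (P : R -> Prop) q m :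
  is_ideal P -> ~ P 1 -> (forall x, ~ P x -> exists y, P (x * y - 1)) ->
  ideal_norm_eq P q -> (0 < m)%N ->
  ((q - 1 %| m - 1)%N <-> forall a, P (a ^+ m - a)).
Proof.
move=> hPi hP1 hPf [s [hs1 [hs2 hs3]]] m0; split.
  exact: (powQ hPi hP1 hPf hs1 hs2 hs3 m0).
exact: (korseltQ hPi hP1 hPf hs1 hs2 hs3 m0).
Qed.
Section Basics.
Variable R : comNzRingType.
Implicit Types I J K : R -> Prop.

Definition incl I J := forall x, I x -> J x.
Definition princ (a : R) : R -> Prop := fun z => exists r, z = a * r.
Definition fullI : R -> Prop := fun _ => True.

Lemma i0 I : is_ideal I -> I 0. Proof. by case. Qed.
Lemma iD I x y : is_ideal I -> I x -> I y -> I (x + y). Proof. by case=> _ h _ _; apply: h. Qed.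
Lemma iN I x : is_ideal I -> I x -> I (- x). Proof. by case=> _ _ h _; apply: h. Qed.
Lemma iB I x y : is_ideal I -> I x -> I y -> I (x - y).
Proof. by move=> hI hx hy; apply: iD => //; apply: iN. Qed.
Lemma iMl I r x : is_ideal I -> I x -> I (r * x). Proof. by case=> _ _ _ h; apply: h. Qed.
Lemma iMr I r x : is_ideal I -> I x -> I (x * r).
Proof. by move=> hI hx; rewrite mulrC; apply: iMl. Qed.

Lemma ideal_sum I n (F : 'I_n -> R) : is_ideal I -> (forall i, I (F i)) -> I (\sum_(i < n) F i).
Proof.
move=> hI hF; apply: (big_ind I) => //; [exact: i0 | by move=> x y; apply: iD].
Qed.

Lemma mul_in I J a b : I a -> J b -> ideal_mul I J (a * b).
Proof.
move=> ha hb; exists 1%N, (fun _ => a), (fun _ => b); split => //; split => //.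
by rewrite big_ord1.
Qed.

Lemma ideal_mul_ideal I J : is_ideal I -> is_ideal (ideal_mul I J).
Proof.
move=> hI; split.
- exists 0%N, (fun _ => 0), (fun _ => 0); split; first by case.
  by split; [case | rewrite big_ord0].
- move=> x y [n1 [a1 [b1 [ha1 [hb1 ->]]]]] [n2 [a2 [b2 [ha2 [hb2 ->]]]]].
  exists (n1 + n2)%N, (fun k => match split k with inl i => a1 i | inr j => a2 j end),
    (fun k => match split k with inl i => b1 i | inr j => b2 j end).
  split; first by move=> k; case: (split k).
  split; first by move=> k; case: (split k).
  rewrite big_split_ord /=; congr (_ + _); apply: eq_bigr => i _.
    by rewrite (unsplitK (inl _ i)).
  by rewrite (unsplitK (inr _ i)).
- move=> x [n [a [b [ha [hb ->]]]]].
  exists n, (fun i => - a i), b; split; first by move=> i; apply: iN.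
  split => //; rewrite -sumrN; apply: eq_bigr => i _; by rewrite mulNr.
- move=> r x [n [a [b [ha [hb ->]]]]].
  exists n, (fun i => r * a i), b; split; first by move=> i; apply: iMl.
  split => //; rewrite mulr_sumr; apply: eq_bigr => i _; by rewrite mulrA.
Qed.

Lemma mul_least I J K : is_ideal K -> (forall a b, I a -> J b -> K (a * b)) ->
  incl (ideal_mul I J) K.
Proof.
move=> hK h x [n [a [b [ha [hb ->]]]]]; apply: ideal_sum => // i; exact: h.
Qed.

Lemma mul_sub_l I J : is_ideal I -> incl (ideal_mul I J) I.
Proof. move=> hI; apply: mul_least => // a b ha _; exact: iMr. Qed.

Lemma mul_sub_r I J : is_ideal J -> incl (ideal_mul I J) J.
Proof. move=> hJ; apply: mul_least => // a b _ hb; exact: iMl. Qed.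

Lemma mul_mono I J I' J' : is_ideal I' -> incl I I' -> incl J J' ->
  incl (ideal_mul I J) (ideal_mul I' J').
Proof.
move=> hI' hII hJJ; apply: mul_least; first exact: ideal_mul_ideal.
move=> a b ha hb; apply: mul_in; [exact: hII | exact: hJJ].
Qed.

Lemma mul_comm I J : is_ideal J -> incl (ideal_mul I J) (ideal_mul J I).
Proof.
move=> hJ; apply: mul_least; first exact: ideal_mul_ideal.
by move=> a b ha hb; rewrite mulrC; apply: mul_in.
Qed.

Lemma preim_ideal K a : is_ideal K -> is_ideal (fun y => K (a * y)).
Proof.
move=> hK; split.
- by rewrite mulr0; apply: i0.
- by move=> x y hx hy; rewrite mulrDr; apply: iD.
- by move=> x hx; rewrite mulrN; apply: iN.
- by move=> r x hx; rewrite mulrCA; apply: iMl.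
Qed.

Lemma mul_assoc1 I J K : is_ideal I ->
  incl (ideal_mul I (ideal_mul J K)) (ideal_mul (ideal_mul I J) K).
Proof.
move=> hI; apply: mul_least; first by apply: ideal_mul_ideal; apply: ideal_mul_ideal.
move=> a b ha hb.
have := @mul_least J K (fun y => ideal_mul (ideal_mul I J) K (a * y)).
apply => //; first by apply: preim_ideal; apply: ideal_mul_ideal; exact: ideal_mul_ideal.
move=> j k hj hk; rewrite mulrA; apply: mul_in => //; exact: mul_in.
Qed.

Lemma mul_assoc2 I J K : is_ideal I ->
  incl (ideal_mul (ideal_mul I J) K) (ideal_mul I (ideal_mul J K)).
Proof.
move=> hI; apply: mul_least; first exact: ideal_mul_ideal.
move=> z k hz hk.
have := @mul_least I J (fun y => ideal_mul I (ideal_mul J K) (k * y)).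
rewrite mulrC; apply => //; first by apply: preim_ideal; apply: ideal_mul_ideal.
move=> a j ha hj; rewrite mulrCA [k * j]mulrC; apply: mul_in => //; exact: mul_in.
Qed.

Lemma ideal_gen_ideal (s : seq R) : is_ideal (ideal_gen s).
Proof.
split.
- by exists (fun _ => 0); rewrite big1 // => i _; rewrite mul0r.
- move=> x y [c ->] [d ->]; exists (fun i => c i + d i).
  by rewrite -big_split; apply: eq_bigr => i _; rewrite mulrDl.
- move=> x [c ->]; exists (fun i => - c i).
  by rewrite -sumrN; apply: eq_bigr => i _; rewrite mulNr.
- move=> r x [c ->]; exists (fun i => r * c i).
  by rewrite mulr_sumr; apply: eq_bigr => i _; rewrite mulrA.
Qed.

Lemma ideal_gen_in (s : seq R) i : (i < size s)%N -> ideal_gen s s`_i.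
Proof.
move=> hi; exists (fun j : 'I_(size s) => ((j : nat) == i)%:R).
rewrite (bigD1 (Ordinal hi)) //= eqxx mul1r big1 ?addr0 // => j hj.
have -> : ((j : nat) == i) = false.
  by apply/negbTE; apply: contra hj => /eqP e; apply/eqP/val_inj.
by rewrite mul0r.
Qed.

Lemma ideal_gen_least (s : seq R) K : is_ideal K -> (forall i, (i < size s)%N -> K s`_i) ->
  incl (ideal_gen s) K.
Proof.
move=> hK hs x [c ->]; apply: ideal_sum => // i; apply: iMl => //; exact: hs.
Qed.

Lemma princ_ideal a : is_ideal (princ a).
Proof.
split.
- by exists 0; rewrite mulr0.
- by move=> x y [r ->] [t ->]; exists (r + t); rewrite mulrDr.
- by move=> x [r ->]; exists (- r); rewrite mulrN.
- by move=> t x [r ->]; exists (t * r); rewrite mulrCA.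
Qed.

End Basics.

Section Noeth.
Variable R : idomainType.
Hypothesis hNoe : noetherian_ring R.
Implicit Types I J K : R -> Prop.

Definition strict I J := incl I J /\ exists x, J x /\ ~ I x.

Lemma noeth_ind (F : (R -> Prop) -> Prop) :
  (forall I, is_ideal I -> (forall J, is_ideal J -> strict I J -> F J) -> F I) ->
  forall I, is_ideal I -> F I.
Proof.
move=> hF0 I0 hI0; apply: NNPP => hnF0.
pose B := {I | is_ideal I /\ ~ F I}.
have step : forall b : B, {b' : B | strict (sval b) (sval b')}.
  move=> [I [hI hF]]; apply: constructive_indefinite_description.
  apply: NNPP => hne; apply: (hF); apply: hF0 => // J hJ hIJ.
  apply: NNPP => hFJ; apply: hne; by exists (exist _ J (conj hJ hFJ)).
pose b0 : B := exist _ I0 (conj hI0 hnF0).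
pose c n := iter n (fun b => sval (step b)) b0.
have cS n : strict (sval (c n)) (sval (c n.+1)) by rewrite /c iterS; exact: (svalP (step _)).
have mono n m : (n <= m)%N -> incl (sval (c n)) (sval (c m)).
  elim: m => [|m IH]; first by rewrite leqn0 => /eqP ->.
  rewrite leq_eqVlt => /orP [/eqP -> //|hnm] x hx.
  by apply: (cS m).1; apply: IH.
have cI n : is_ideal (sval (c n)) by case: (c n) => ? [].
pose U x := exists n, sval (c n) x.
have hU : is_ideal U.
  split.
  - by exists 0%N; apply: i0.
  - move=> x y [n hx] [m hy]; exists (maxn n m); apply: iD => //.
      exact: (mono n _ (leq_maxl n m)).
    exact: (mono m _ (leq_maxr n m)).
  - by move=> x [n hx]; exists n; apply: iN.
  - by move=> r x [n hx]; exists n; apply: iMl.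
have [s hs] := hNoe hU.
have [n hn] : exists n, forall i, (i < size s)%N -> sval (c n) s`_i.
  have : forall i, (i < size s)%N -> U s`_i.
    by move=> i hi; apply/hs; apply: ideal_gen_in.
  elim: s {hs} => [|a t IH] h; first by exists 0%N.
  have [n1 hn1] : exists n, sval (c n) a by have := h 0%N isT.
  have [n2 hn2] := IH (fun i hi => h i.+1 hi).
  exists (maxn n1 n2) => -[|i] hi /=.
    exact: (mono n1 _ (leq_maxl n1 n2)).
  exact: (mono n2 _ (leq_maxr n1 n2) _ (hn2 i hi)).
have sub : incl U (sval (c n)).
  move=> x /hs; exact: ideal_gen_least.
have [x [hx1 hx2]] := (cS n).2.
by apply: hx2; apply: sub; exists n.+1.
Qed.

End Noeth.
Lemma det_kernel (D : idomainType) m (M : 'M[D]_m) (g : 'cV[D]_m) :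
  M *m g = 0 -> g != 0 -> \det M = 0.
Proof.
move=> h g0; have : \adj M *m M *m g = 0 by rewrite -mulmxA h mulmx0.
rewrite mul_adj_mx mul_scalar_mx => /eqP; rewrite scalemx_eq0 (negbTE g0) orbF.
by move/eqP.
Qed.

Lemma char_poly_eval (F : fieldType) m (M : 'M[F]_m) x :
  (char_poly M).[x] = \det (x%:M - M).
Proof.
rewrite /char_poly -horner_evalE -det_map_mx; congr (\det _).
apply/matrixP => i j; rewrite !mxE /= horner_evalE.
by rewrite hornerD hornerN hornerMn hornerX hornerC.
Qed.

Lemma int_lemma (R : idomainType) (hIC : integrally_closed R) m (A : 'M[R]_m)
  (g : 'cV[R]_m) (b c : R) :
  c != 0 -> g != 0 -> (forall j, b * g j 0 = c * \sum_k A j k * g k 0) ->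
  exists r, b = c * r.
Proof.
move=> c0 g0 hg.
pose f := @tofrac R.
pose y := f b / f c.
have cF : f c != 0 by rewrite tofrac_eq0.
have hroot : root (map_poly f (char_poly A)) y.
  rewrite map_char_poly /root char_poly_eval.
  apply/eqP; apply: (det_kernel (g := map_mx f g)).
    rewrite mulmxBl mul_scalar_mx -map_mxM; apply/matrixP => j z.
    rewrite ord1 !mxE /y.
    have e := congr1 (@tofrac R) (hg j); rewrite !tofracM in e.
    apply/eqP; rewrite subr_eq0 mulrAC e mulrAC mulfV // mul1r; exact/eqP.
  apply: contra g0 => /eqP h; apply/eqP/matrixP => i j.
  move/matrixP: h => /(_ i j); rewrite !mxE => /eqP.
  by rewrite tofrac_eq0 => /eqP.
have [r hr] := hIC y (ex_intro _ (char_poly A) (conj (char_poly_monic A) hroot)).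
exists r; apply/eqP; rewrite -tofrac_eq tofracM -hr /y mulrC divfK //.
Qed.

Section Prods.
Variable R : idomainType.
Implicit Types I J K : R -> Prop.

Fixpoint prodI (ps : seq (R -> Prop)) : R -> Prop :=
  if ps is p :: ps' then ideal_mul p (prodI ps') else fullI (R:=R).

Fixpoint allI (Q : (R -> Prop) -> Prop) (ps : seq (R -> Prop)) : Prop :=
  if ps is p :: ps' then Q p /\ allI Q ps' else True.

Lemma allI_cat Q ps1 ps2 : allI Q ps1 -> allI Q ps2 -> allI Q (ps1 ++ ps2).
Proof. by elim: ps1 => //= p ps IH [h1 h2] h3; split => //; apply: IH. Qed.

Lemma allI_catl Q ps1 ps2 : allI Q (ps1 ++ ps2) -> allI Q ps1 /\ allI Q ps2.
Proof. by elim: ps1 => //= p ps IH [h1 /IH [h2 h3]]. Qed.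

Lemma fullI_ideal : is_ideal (fullI (R:=R)).
Proof. by []. Qed.

Lemma prodI_ideal ps : allI (@is_ideal R) ps -> is_ideal (prodI ps).
Proof. case: ps => [|p ps] /= h; first exact: fullI_ideal. exact: ideal_mul_ideal h.1. Qed.

Lemma prodI_cat ps1 ps2 : allI (@is_ideal R) ps1 -> allI (@is_ideal R) ps2 ->
  incl (prodI (ps1 ++ ps2)) (ideal_mul (prodI ps1) (prodI ps2)).
Proof.
elim: ps1 => [|p ps IH] /= h1 h2.
  by move=> x hx; rewrite -[x]mul1r; apply: mul_in.
move=> x hx; apply: mul_assoc1; first exact: h1.1.
have T1 := mul_mono h1.1 (fun _ h => h) (IH h1.2 h2); exact: T1 hx.
Qed.

Lemma prodI_prime P ps : is_prime_ideal P -> allI (@is_ideal R) ps -> incl (prodI ps) P ->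
  exists ps1 q ps2, ps = ps1 ++ q :: ps2 /\ incl q P.
Proof.
move=> [[hPi hP1] hPp]; elim: ps => [|p ps IH] /= hI hsub.
  by exfalso; apply: hP1; apply: hsub.
case: (classic (incl p P)) => hp; first by exists [::], p, ps.
have [a [ha haP]] : exists a, p a /\ ~ P a.
  apply: NNPP => hn; apply: hp => x hx; apply: NNPP => hxP; apply: hn; by exists x.
have [ps1 [q [ps2 [-> hq]]]] : exists ps1 q ps2, ps = ps1 ++ q :: ps2 /\ incl q P.
  apply: IH; first exact: hI.2.
  move=> y hy; have := hPp _ _ (hsub _ (mul_in ha hy)); by case.
by exists (p :: ps1), q, ps2.
Qed.

Lemma prodI_rem q ps1 ps2 : is_ideal q -> allI (@is_ideal R) ps1 -> allI (@is_ideal R) ps2 ->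
  incl (ideal_mul q (prodI (ps1 ++ ps2))) (prodI (ps1 ++ q :: ps2)).
Proof.
move=> hq; elim: ps1 => [|p ps IH] /= h1 h2 x hx //.
have hp := h1.1; have hps := prodI_ideal (allI_cat h1.2 h2).
have h3 := mul_assoc1 hq hx.
have h4 := mul_mono (ideal_mul_ideal _ hp) (mul_comm hp) (fun _ h => h) h3.
have h5 := mul_assoc2 hp h4.
exact: (mul_mono hp (fun _ h => h) (IH h1.2 h2) h5).
Qed.

Lemma allI_impl (Q Q' : (R -> Prop) -> Prop) ps :
  (forall p, Q p -> Q' p) -> allI Q ps -> allI Q' ps.
Proof. by move=> h; elim: ps => //= p ps IH [h1 h2]; split; [apply: h | apply: IH]. Qed.

Definition nzprime (p : R -> Prop) := is_prime_ideal p /\ ~ is_zero_ideal p.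

Lemma nzprime_ideal p : nzprime p -> is_ideal p.
Proof. by case=> [[[]]]. Qed.

Definition sumP I (a : R) : R -> Prop := fun z => exists x r, I x /\ z = x + a * r.

Lemma sumP_ideal I a : is_ideal I -> is_ideal (sumP I a).
Proof.
move=> hI; split.
- by exists 0, 0; rewrite mulr0 addr0; split => //; apply: i0.
- move=> x y [x1 [r1 [h1 ->]]] [x2 [r2 [h2 ->]]]; exists (x1 + x2), (r1 + r2).
  by split; [apply: iD | rewrite mulrDr addrACA].
- move=> x [x1 [r1 [h1 ->]]]; exists (- x1), (- r1).
  by split; [apply: iN | rewrite mulrN opprD].
- move=> t x [x1 [r1 [h1 ->]]]; exists (t * x1), (t * r1).
  by split; [apply: iMl | rewrite mulrDr mulrCA].
Qed.

Lemma sumP_incl I a : incl I (sumP I a).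
Proof. by move=> x hx; exists x, 0; rewrite mulr0 addr0. Qed.

Lemma sumP_a I a : is_ideal I -> sumP I a a.
Proof. by move=> hI; exists 0, 1; rewrite mulr1 add0r; split => //; apply: i0. Qed.

Lemma nonzero_incl I J : ~ is_zero_ideal I -> incl I J -> ~ is_zero_ideal J.
Proof. by move=> hI hIJ hJ; apply: hI => x /hIJ /hJ. Qed.

Lemma contains_prod (hNoe : noetherian_ring R) I : is_ideal I -> ~ is_zero_ideal I ->
  exists ps, allI nzprime ps /\ incl (prodI ps) I.
Proof.
move: I; apply: (noeth_ind hNoe) => I hI IH hI0.
case: (classic (I 1)) => hI1.
  by exists [::]; split => // x _; rewrite -[x]mulr1; apply: iMl.
case: (classic (is_prime_ideal I)) => hpr.
  by exists [:: I]; split; [split | exact: mul_sub_l].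
have [a [b [hab [ha hb]]]] : exists a b, I (a * b) /\ ~ I a /\ ~ I b.
  apply: NNPP => hn; apply: hpr; split; first by [].
  move=> a b hab; apply: NNPP => hn2; apply: hn; exists a, b.
  by split => //; split => h; apply: hn2; [left | right].
have st : forall c, ~ I c -> strict I (sumP I c).
  by move=> c hc; split; [exact: sumP_incl | exists c; split => //; apply: sumP_a].
have [ps1 [g1 s1]] := IH _ (sumP_ideal a hI) (st a ha) (nonzero_incl hI0 (@sumP_incl I a)).
have [ps2 [g2 s2]] := IH _ (sumP_ideal b hI) (st b hb) (nonzero_incl hI0 (@sumP_incl I b)).
exists (ps1 ++ ps2); split; first exact: allI_cat.
move=> x hx.
have hi1 := allI_impl nzprime_ideal g1; have hi2 := allI_impl nzprime_ideal g2.
have := prodI_cat hi1 hi2 hx.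
have T := mul_mono (sumP_ideal a hI) s1 s2.
move=> /T; apply: mul_least => // u v [x1 [r1 [hx1 ->]]] [x2 [r2 [hx2 ->]]].
rewrite mulrDl; apply: iD => //; first exact: iMr.
rewrite mulrDr; apply: iD => //; first exact: iMl.
by rewrite mulrACA; apply: iMr.
Qed.

End Prods.

Lemma ex_min (Q : nat -> Prop) : (exists n, Q n) -> exists n, Q n /\ forall m, (m < n)%N -> ~ Q m.
Proof.
move=> [n hn]; apply: NNPP => hne.
suff : forall k m, (m <= k)%N -> ~ Q m by move/(_ n n (leqnn n)).
elim=> [|k IH] m hm hQ.
  by apply: hne; exists m; split => // j; move: hm; rewrite leqn0 => /eqP ->.
apply: hne; exists m; split => // j hj; apply: IH; by rewrite -ltnS (leq_trans hj hm).
Qed.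

Section Dede.
Variable R : idomainType.
Hypothesis hR : dedekind_domain R.
Implicit Types I J K P : R -> Prop.

Lemma nz_elt I : ~ is_zero_ideal I -> exists c, I c /\ c != 0.
Proof.
move=> h; apply: NNPP => hn; apply: h => x hx; apply/eqP; apply: NNPP => hx0.
by apply: hn; exists x; split => //; apply/negP.
Qed.

Lemma nzprime_max P : nzprime P -> is_maximal_ideal P.
Proof. case: hR => _ _ hm [h1 h2]; exact: hm. Qed.

Lemma invertible P : nzprime P -> exists Q c, [/\ is_ideal Q, c != 0,
  incl (ideal_mul P Q) (princ c) & incl (princ c) (ideal_mul P Q)].
Proof.
move=> hP; have hPmax := nzprime_max hP.
have hPi : is_ideal P by case: hP => [[[]]].
have hP1 : ~ P 1 by case: hP => [[[]]].
case: hR => hNoe hIC _.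
have [c [hcP c0]] := nz_elt hP.2.
have hc : is_ideal (princ c) := princ_ideal c.
have cz : ~ is_zero_ideal (princ c).
  by move=> h; move/eqP: c0; apply; apply: h; exists 1; rewrite mulr1.
pose Good n := exists ps : seq (R -> Prop), [/\ size ps = n, allI (@nzprime R) ps & incl (prodI ps) (princ c)].
have [n [[ps [hsz hps hsub]] hmin]] : exists n, Good n /\ forall m, (m < n)%N -> ~ Good m.
  apply: ex_min; have [ps [h1 h2]] := contains_prod hNoe hc cz.
  by exists (size ps), ps.
have hcsubP : incl (princ c) P by move=> x [r ->]; apply: iMr.
have hpsI := allI_impl (@nzprime_ideal R) hps.
have [ps1 [q [ps2 [eps hqP]]]] := prodI_prime hP.1 hpsI (fun x h => hcsubP x (hsub x h)).
subst ps.
have [hps1 /= [hq hps2]] := allI_catl hps.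
have hPq : incl P q.
  have hqmax := nzprime_max hq.
  case: hqmax => _ /(_ P hPi hqP) [e|//]; by move=> x /e.
have [b [hb hbc]] : exists b, prodI (ps1 ++ ps2) b /\ ~ princ c b.
  apply: NNPP => hn; apply: (hmin (size (ps1 ++ ps2))).
    by rewrite -hsz !size_cat /= addnS.
  exists (ps1 ++ ps2); split => //; first exact: allI_cat.
  move=> x hx; apply: NNPP => hx'; apply: hn; by exists x.
have hqi := nzprime_ideal hq.
have [hi1 hi2] := allI_catl (allI_impl (@nzprime_ideal R) hps).
have hbP : forall p, P p -> princ c (b * p).
  move=> p hp; apply: hsub; rewrite mulrC; apply: (prodI_rem hqi hi1 hi2.2).
  apply: mul_in => //; exact: hPq.
pose Qi x := forall p, P p -> princ c (x * p).
have hQi : is_ideal Qi.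
  split.
  - by move=> p _; rewrite mul0r; apply: i0.
  - by move=> x y hx hy p hp; rewrite mulrDl; apply: iD => //; [apply: hx | apply: hy].
  - by move=> x hx p hp; rewrite mulNr; apply: iN => //; apply: hx.
  - by move=> r x hx p hp; rewrite -mulrA; apply: iMl => //; apply: hx.
have PQc : incl (ideal_mul P Qi) (princ c).
  by apply: mul_least => // p x hp hx; rewrite mulrC; apply: hx.
have cQi : Qi c by move=> p _; exists p.
pose I r := ideal_mul P Qi (c * r).
have hI : is_ideal I by apply: preim_ideal; apply: ideal_mul_ideal.
have hPI : incl P I by move=> p hp; rewrite /I mulrC; apply: mul_in.
case: hPmax => _ /(_ I hI hPI) [eI|hI1].
  exfalso.
  have bQi : Qi b by [].
  have hbp : forall p, P p -> exists r, b * p = c * r /\ P r.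
    move=> p hp; have := PQc (p * b) (mul_in hp bQi).
    move=> -[r hr]; exists r; rewrite mulrC; split => //; apply/eI; rewrite /I -hr.
    exact: mul_in.
  have [gs hgs] := hNoe P hPi.
  pose m := size gs.
  have H : forall j : 'I_m, exists cf : 'I_m -> R, b * gs`_j = c * \sum_k cf k * gs`_k.
    move=> j; have [r [hr hrP]] := hbp gs`_j (proj2 (hgs _) (ideal_gen_in (ltn_ord j))).
    have [cf hcf] := proj1 (hgs r) hrP.
    by exists cf; rewrite hr hcf.
  pose cf j := proj1_sig (constructive_indefinite_description _ (H j)).
  pose A := \matrix_(j < m, k < m) cf j k.
  pose g := \col_(k < m) gs`_k.
  have g0 : g != 0.
    apply/eqP => hg; apply: hP.2 => x /hgs [d ->]; apply: big1 => k _.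
    by move/matrixP: hg => /(_ k 0); rewrite !mxE => ->; rewrite mulr0.
  have hg : forall j, b * g j 0 = c * \sum_k A j k * g k 0.
    move=> j; rewrite !mxE.
    rewrite (proj2_sig (constructive_indefinite_description _ (H j))).
    by congr (_ * _); apply: eq_bigr => k _; rewrite !mxE.
  have [r hr] := int_lemma hIC c0 g0 hg.
  by apply: hbc; exists r.
exists Qi, c; split => //.
move=> x [r ->]; have := iMr r (ideal_mul_ideal Qi hPi) hI1.
by rewrite /I mulr1.
Qed.

End Dede.

Section Div.
Variable R : idomainType.
Hypothesis hR : dedekind_domain R.
Implicit Types I J K M P : R -> Prop.

Lemma division P M : nzprime P -> is_ideal M -> incl M P ->
  exists J, is_ideal J /\ subset_eq M (ideal_mul P J).
Proof.
move=> hP hM hMP.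
have hPi : is_ideal P by case: hP => [[[]]].
have [Q [c [hQ c0 PQc cPQ]]] := invertible hR hP.
pose J r := ideal_mul Q M (c * r).
have hJ : is_ideal J by apply: preim_ideal; apply: ideal_mul_ideal.
have QMc : incl (ideal_mul Q M) (princ c).
  move=> x hx; apply: PQc; apply: (mul_comm hPi).
  exact: (mul_mono hQ (fun _ h => h) hMP hx).
exists J; split => // m; split => [hm|].
  have [n [a [b [ha [hb hc]]]]] : ideal_mul P Q c by apply: cPQ; exists 1; rewrite mulr1.
  have ht : forall i, exists t, b i * m = c * t.
    by move=> i; apply: QMc; apply: mul_in.
  pose t i := proj1_sig (constructive_indefinite_description _ (ht i)).
  have htE i : b i * m = c * t i := proj2_sig (constructive_indefinite_description _ (ht i)).
  have -> : m = \sum_(i < n) a i * t i.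
    apply: (mulfI c0); rewrite mulr_sumr {1}hc mulr_suml.
    by apply: eq_bigr => i _; rewrite -mulrA htE mulrCA.
  exists n, a, t; split => //; split => // i.
  by rewrite /J -htE; apply: mul_in.
apply: mul_least => // p r hp hr.
have : ideal_mul (princ c) M (p * (c * r)).
  have h1 := mul_assoc1 hPi (mul_in hp (hr : ideal_mul Q M (c * r))).
  exact: (mul_mono (princ_ideal c) PQc (fun _ h => h) h1).
have cM : incl (ideal_mul (princ c) M) (fun z => exists y, M y /\ z = c * y).
  apply: mul_least.
    split.
    - by exists 0; rewrite mulr0; split => //; apply: i0.
    - by move=> x y [x1 [h1 ->]] [y1 [h2 ->]]; exists (x1 + y1); rewrite mulrDr; split => //; apply: iD.
    - by move=> x [x1 [h1 ->]]; exists (- x1); rewrite mulrN; split => //; apply: iN.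
    - by move=> t x [x1 [h1 ->]]; exists (t * x1); rewrite mulrCA; split => //; apply: iMl.
  by move=> u v [w ->] hv; exists (w * v); rewrite mulrA; split => //; apply: iMl.
move=> /cM [y [hy e]]; rewrite mulrCA in e; move/(mulfI c0): e => ->; exact: hy.
Qed.

Lemma nakayama P M : is_ideal P -> ~ P 1 -> is_ideal M -> ~ is_zero_ideal M ->
  incl M (ideal_mul P M) -> False.
Proof.
move=> hPi hP1 hM hM0 hsub.
case: hR => hNoe _ _.
have [gs hgs] := hNoe M hM.
pose m := size gs.
pose PG z := exists cf : 'I_m -> R, (forall k, P (cf k)) /\ z = \sum_k cf k * gs`_k.
have hPG : incl (ideal_mul P M) PG.
  apply: mul_least.
    split.
    - by exists (fun _ => 0); split => [k|]; [apply: i0 | rewrite big1 // => k _; rewrite mul0r].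
    - move=> x y [c1 [h1 ->]] [c2 [h2 ->]]; exists (fun k => c1 k + c2 k); split.
        by move=> k; apply: iD.
      by rewrite -big_split; apply: eq_bigr => k _; rewrite mulrDl.
    - move=> x [c1 [h1 ->]]; exists (fun k => - c1 k); split; first by move=> k; apply: iN.
      by rewrite -sumrN; apply: eq_bigr => k _; rewrite mulNr.
    - move=> r x [c1 [h1 ->]]; exists (fun k => r * c1 k); split; first by move=> k; apply: iMl.
      by rewrite mulr_sumr; apply: eq_bigr => k _; rewrite mulrA.
  move=> a y ha /hgs [d ->]; exists (fun k => a * d k); split; first by move=> k; apply: iMr.
  by rewrite mulr_sumr; apply: eq_bigr => k _; rewrite mulrA.
have H : forall j : 'I_m, exists cf : 'I_m -> R, (forall k, P (cf k)) /\ gs`_j = \sum_k cf k * gs`_k.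
  move=> j; apply: hPG; apply: hsub; apply/hgs; exact: ideal_gen_in.
pose cf j := proj1_sig (constructive_indefinite_description _ (H j)).
have hcf j := proj2_sig (constructive_indefinite_description _ (H j)).
pose A := \matrix_(j < m, k < m) cf j k.
pose g := \col_(k < m) gs`_k.
have g0 : g != 0.
  apply/eqP => hg; apply: hM0 => x /hgs [d ->]; apply: big1 => k _.
  by move/matrixP: hg => /(_ k 0); rewrite !mxE => ->; rewrite mulr0.
have hdet : \det (1%:M - A) = 0.
  apply: (det_kernel _ g0); apply/matrixP => j z.
  rewrite ord1 mulmxBl mul1mx !mxE {1}(hcf j).2; apply/eqP; rewrite subr_eq0; apply/eqP.
  by apply: eq_bigr => k _; rewrite !mxE.
have hA : forall j k, P (A j k) by move=> j k; rewrite mxE; exact: (hcf j).1.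
have := det1B_mod hPi hP1 hA; rewrite hdet sub0r => h.
by apply: hP1; rewrite -[1]opprK; apply: iN.
Qed.

Lemma max_sumP P j : is_maximal_ideal P -> ~ P j -> exists p r, P p /\ 1 = p + j * r.
Proof.
move=> [[hPi hP1] hmax] hj.
case: (hmax (sumP P j) (sumP_ideal j hPi) (@sumP_incl _ P j)) => [e|[p [r [hp e]]]].
  by exfalso; apply: hj; apply/e; apply: sumP_a.
by exists p, r.
Qed.

Lemma max_prime P : is_maximal_ideal P -> is_prime_ideal P.
Proof.
move=> hm; have hm' := hm; case: hm' => [[hPi hP1] _]; split => // a b hab.
case: (classic (P a)) => ha; [by left | right].
have [p [r [hp e]]] := max_sumP hm ha.
rewrite -[b]mulr1 e mulrDr; apply: iD => //; first exact: iMl.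
by rewrite mulrA [b * a]mulrC; apply: iMr.
Qed.

Lemma exists_max M : is_ideal M -> ~ M 1 -> exists P, is_maximal_ideal P /\ incl M P.
Proof.
case: hR => hNoe _ _.
move: M; apply: (noeth_ind hNoe) => M hM IH hM1.
case: (classic (is_maximal_ideal M)) => hmx; first by exists M; split => // y.
have [J [hJ hMJ hJM hJ1]] : exists J, [/\ is_ideal J, incl M J, ~ subset_eq J M & ~ J 1].
  apply: NNPP => hn; apply: hmx; split => // J hJ hMJ.
  case: (classic (subset_eq J M)) => h; [by left | right].
  apply: NNPP => hJ1; apply: hn; by exists J.
have [y [hyJ hyM]] : exists y, J y /\ ~ M y.
  apply: NNPP => hn; apply: hJM => x; split; last exact: hMJ.
  move=> hx; apply: NNPP => hxM; apply: hn; by exists x.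
have [P [hP hJP]] := IH J hJ (conj hMJ (ex_intro _ y (conj hyJ hyM))) hJ1.
by exists P; split => // x /hMJ /hJP.
Qed.

Lemma dvd_incl P N : is_ideal P -> ideal_dvd P N -> incl N P.
Proof. by move=> hP [J [hJ e]] x /e; apply: mul_sub_l. Qed.

Lemma radical (x : R) M : is_ideal M -> ~ is_zero_ideal M -> squarefree_ideal M ->
  (forall P, nzprime P -> incl M P -> P x) -> M x.
Proof.
case: hR => hNoe _ _.
move=> hM; move: M hM x; apply: (noeth_ind hNoe) => M hM IH x hM0 hsq hx.
case: (classic (M 1)) => hM1; first by rewrite -[x]mulr1; apply: iMl.
have [P [hPm hMP]] := exists_max hM hM1.
have hPp := max_prime hPm.
have hPi : is_ideal P by case: hPm => [[]].
have hP1 : ~ P 1 by case: hPm => [[]].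
have hPnz : ~ is_zero_ideal P := nonzero_incl hM0 hMP.
have hPn : nzprime P by [].
have [J [hJ eMJ]] := division hPn hM hMP.
have hMJ : incl M J by move=> y /eMJ; apply: mul_sub_r.
have hJM : exists y, J y /\ ~ M y.
  apply: NNPP => hn; apply: (nakayama hPi hP1 hM hM0) => y hy.
  have := proj1 (eMJ y) hy; apply: mul_mono => // z hz.
  apply: NNPP => hzM; apply: hn; by exists z.
have hJ0 : ~ is_zero_ideal J := nonzero_incl hM0 hMJ.
have sqshift : forall L, is_ideal L -> forall Q, is_ideal Q ->
    subset_eq J (ideal_mul Q L) -> subset_eq M (ideal_mul Q (ideal_mul P L)).
  move=> L hL Q hQ e y; split => hy.
  - have h1 := proj1 (eMJ y) hy.
    have h2 := mul_mono hPi (fun _ h => h) (fun z => proj1 (e z)) h1.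
    have h3 := mul_assoc1 hPi h2.
    have h4 := mul_mono (ideal_mul_ideal _ hQ) (mul_comm hQ) (fun _ h => h) h3.
    have h5 := @mul_assoc2 _ Q P L hQ y h4. exact: h5.
  - have h1 := mul_assoc1 hQ hy.
    have h2 := mul_mono (ideal_mul_ideal _ hPi) (mul_comm hPi) (fun _ h => h) h1.
    have h3 := mul_assoc2 hPi h2.
    have h4 := mul_mono hPi (fun _ h => h) (fun z => proj2 (e z)) h3.
    exact: proj2 (eMJ y) h4.
have hJsq : squarefree_ideal J.
  move=> Q hQp hQ0 [L [hL e]]; apply: (hsq Q hQp hQ0).
  have hQi : is_ideal Q by case: hQp => [[]].
  exists (ideal_mul P L); split; first exact: ideal_mul_ideal.
  exact: sqshift (ideal_mul_ideal Q hQi) e.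
have hxJ : J x.
  apply: (IH J hJ) => //.
  by move=> Q hQ hJQ; apply: hx => // z /hMJ /hJQ.
have hxP : P x by apply: hx.
have [j [hj hjP]] : exists j, J j /\ ~ P j.
  apply: NNPP => hn.
  have hJP : incl J P by move=> z hz; apply: NNPP => hzP; apply: hn; exists z.
  have [L [hL eJ]] := division hPn hJ hJP.
  apply: (hsq P hPp hPnz); exists L; split => //.
  have := sqshift L hL P hPi eJ => e y; split => hy.
    have h1 := proj1 (e y) hy.
    exact: (@mul_assoc1 _ P P L hPi y h1).
  apply/e; exact: (@mul_assoc2 _ P P L hPi y hy).
have [p [r [hp e]]] := max_sumP hPm hjP.
apply/eMJ; rewrite -[x]mulr1 e mulrDr; apply: iD; first exact: ideal_mul_ideal.
  by rewrite mulrC; apply: mul_in.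
by rewrite mulrA [x * j]mulrC -mulrA mulrC; apply: mul_in => //; apply: iMr.
Qed.

End Div.

Section Norms.
Variable R : comNzRingType.
Implicit Types N P : R -> Prop.

Lemma norm_gt1 N k : is_ideal N -> ~ N 1 -> ideal_norm_eq N k -> (1 < k)%N.
Proof.
move=> hN hN1 [s [hs1 [hs2 hs3]]].
have [i0 hi0 h0] := hs3 0; have [i1 hi1 h1] := hs3 1.
rewrite ltnNge; apply/negP => hk.
have e0 : i0 = 0%N by apply/eqP; rewrite -leqn0 -ltnS (leq_trans hi0 hk).
have e1 : i1 = 0%N by apply/eqP; rewrite -leqn0 -ltnS (leq_trans hi1 hk).
apply: hN1; have := iB hN h1 h0; rewrite e0 e1.
by rewrite sub0r opprK subrK.
Qed.

Lemma norm_le N k1 k2 : is_ideal N -> ideal_norm_eq N k1 -> ideal_norm_eq N k2 -> (k1 <= k2)%N.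
Proof.
move=> hN [s [hs1 [hs2 hs3]]] [t [ht1 [ht2 ht3]]].
have H : forall i : 'I_k1, exists j : 'I_k2, N (s`_i - t`_j).
  by move=> i; have [j hj h] := ht3 s`_i; exists (Ordinal hj).
pose f i := proj1_sig (constructive_indefinite_description _ (H i)).
have hf (i : 'I_k1) : N (s`_i - t`_(f i)) := proj2_sig (constructive_indefinite_description _ (H i)).
have finj : injective f.
  move=> i i' e; apply/val_inj; apply: (hs2 _ _ (ltn_ord i) (ltn_ord i')).
  have := iB hN (hf i) (hf i'); rewrite e.
  by rewrite opprB addrA subrK.
by have := leq_card f finj; rewrite !card_ord.
Qed.

Lemma norm_uniq N k1 k2 : is_ideal N -> ideal_norm_eq N k1 -> ideal_norm_eq N k2 -> k1 = k2.
Proof. by move=> hN h1 h2; apply/eqP; rewrite eqn_leq !(norm_le hN). Qed.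

Lemma dedup P (t : seq R) : is_ideal P -> exists u : seq R,
  (forall i j, (i < size u)%N -> (j < size u)%N -> P (u`_i - u`_j) -> i = j) /\
  (forall i, (i < size t)%N -> exists j, (j < size u)%N /\ P (t`_i - u`_j)).
Proof.
move=> hP; elim: t => [|x t [u [hu1 hu2]]]; first by exists [::].
case: (classic (exists j, (j < size u)%N /\ P (x - u`_j))) => hx.
  exists u; split => // -[|i] /= hi; [exact: hx | exact: hu2].
exists (x :: u); split.
  move=> [|i] [|j] //= hi hj hd.
  - by exfalso; apply: hx; exists j.
  - by exfalso; apply: hx; exists i; split => //; rewrite -opprB; apply: iN.
  - by congr S; apply: hu1.
move=> [|i] /= hi; first by exists 0%N; split => //; rewrite subrr; apply: i0.
by have [j [hj h]] := hu2 i hi; exists j.+1.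
Qed.

Lemma norm_sub N P k : is_ideal N -> is_ideal P -> incl N P -> ideal_norm_eq N k ->
  exists k', ideal_norm_eq P k'.
Proof.
move=> hN hP hNP [s [hs1 [hs2 hs3]]].
have [u [hu1 hu2]] := dedup s hP.
exists (size u), u; split => //; split => // y.
have [i hi hy] := hs3 y.
have hi' : (i < size s)%N by rewrite hs1.
have [j [hj hd]] := hu2 i hi'.
exists j => //; have := iD hP (hNP _ hy) hd; by rewrite addrA subrK.
Qed.

End Norms.

Lemma max_field (R : idomainType) (P : R -> Prop) : is_maximal_ideal P ->
  forall x, ~ P x -> exists y, P (x * y - 1).
Proof.
move=> hm x hx; have [p [r [hp e]]] := max_sumP hm hx.
have hPi : is_ideal P by case: hm => [[]].
by exists r; rewrite e opprD addrCA subrr addr0; apply: iN.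
Qed.

Theorem theorem3p1 (R : idomainType) (hR : dedekind_domain R)
  (N : R -> Prop) (hN : is_composite_ideal N) :
  carmichael_ideal N <->
  [/\ squarefree_ideal N,
      ideal_norm_finite N &
      forall P : R -> Prop, is_prime_ideal P -> ideal_dvd P N ->
        forall kN kP : nat, ideal_norm_eq N kN -> ideal_norm_eq P kP ->
          (kP - 1 %| kN - 1)%N].
Proof.
have [[hNi hN1] [hN0 hNp]] := hN.
have hR' := hR; case: hR' => hNoe hIC hmax.
split.
- move=> [k [hk hnf hcar]].
  have k1 := norm_gt1 hNi hN1 hk.
  split.
  + move=> P hPp hP0 [J [hJ e]].
    have hPi : is_ideal P by case: hPp => [[]].
    have hP1 : ~ P 1 by case: hPp => [[]].
    pose M := ideal_mul P J.
    have hM : is_ideal M := ideal_mul_ideal J hPi.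
    have NM : incl N (ideal_mul P M).
      by move=> y /e hy; exact: (@mul_assoc2 _ P P J hPi y hy).
    have NsubM : incl N M by move=> y /NM; apply: mul_sub_r.
    have MN : incl M N.
      move=> a ha.
      have haP : P a := mul_sub_l hPi ha.
      have h2 : N (a * a) by apply/e; exact: (@mul_assoc1 _ P P J hPi _ (mul_in haP ha)).
      have hk2 : N (a ^+ k) by rewrite -(subnK k1) exprD expr2; apply: iMl.
      by have := iB hNi hk2 (hcar a); rewrite opprB addrC subrK.
    apply: (nakayama hR hPi hP1 hM (nonzero_incl hN0 NsubM)).
    by move=> y /MN /NM.
  + by exists k.
  + move=> P hPp hdvd kN kP hkN hkP.
    have hPi : is_ideal P by case: hPp => [[]].
    have hP1 : ~ P 1 by case: hPp => [[]].
    have hNP := dvd_incl hPi hdvd.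
    have hP0 := nonzero_incl hN0 hNP.
    have hPm := hmax P hPp hP0.
    have hPf := max_field hPm.
    have ek : k = kN := norm_uniq hNi hk hkN.
    subst kN.
    apply/(fin_quot_pow hPi hP1 hPf hkP (ltnW k1)) => a.
    by apply: hNP; apply: hcar.
- move=> [hsq [kN hkN] h3].
  have k1 := norm_gt1 hNi hN1 hkN.
  exists kN; split => //.
  + move=> [_ hinv]; apply: hNp; split; first by split.
    move=> a b hab; case: (classic (N a)) => ha; [by left | right].
    have [y hy] := hinv a ha.
    have := iB hNi (iMr y hNi hab) (iMl b hNi hy).
    by rewrite mulrBr mulr1 [b * (a * y)]mulrCA mulrA opprB addrC subrK.
  + move=> a; apply: (radical hR) => // P hP hNP.
    have hPi : is_ideal P by case: hP => [[[]]].
    have hP1 : ~ P 1 by case: hP => [[[]]].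
    have hPm := nzprime_max hR hP.
    have hPf := max_field hPm.
    have [kP hkP] := norm_sub hNi hPi hNP hkN.
    have [J [hJ e]] := division hR hP hNi hNP.
    have hd := h3 P hP.1 (ex_intro _ J (conj hJ e)) kN kP hkN hkP.
    exact: (proj1 (fin_quot_pow hPi hP1 hPf hkP (ltnW k1)) hd a).
Qed.
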